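(* Let $V$ be a finite-dimensional vector space over an algebraically closed field $\mathbf{k}$ of characteristic $p$, of dimension $\mathbf{n}\ge3$, equipped with a bilinear form $(,)$ and a quadratic form $Q$ such that either (i) $Q=0$, $(x,x)=0$ for all $x$, and $V^\perp=0$; or (ii) $Q\ne0$, $(x,y)=Q(x+y)-Q(x)-Q(y)$ for all $x,y$, and $Q|_{V^\perp}$ is injective. Let $\kappa\in\{0,1\}$ with $\mathbf{n}-\kappa$ even, $n=(\mathbf{n}-\kappa)/2$. Let $p_1\ge\dots\ge p_\sigma\ge1$ be integers with sum $n$, and if $\kappa=1$ set $p_{\sigma+1}=1/2$. Let $g\in Is(V)$ and let $(w^t_i)$ be a $(g,p_* )$-adapted collection. Let $e\le f$ in $[1,\sigma+\kappa]$ and assume that the subspace $\mathcal{W}_{e,f}$ spanned by $\{w^x_i;\ x\in[e,f],\ i\in[0,2p_x-1]\}$ is $g$-stable. Then the radical of $(,)|_{\mathcal{W}_{e,f}}$ is $0$, unless $\kappa=1$, $f=\sigma+1$ and $p=2$, in which case this radical equals $V^\perp$.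
   Context: $V^\perp=\{x\in V;(x,V)=0\}$. $Is(V)$ is the group of $g\in GL(V)$ with $(gx,gy)=(x,y)$ and $Q(gx)=Q(x)$ for all $x,y$. A collection $w^t_i\in V$ ($t\in[1,\sigma+\kappa]$, $i\in\mathbb{Z}$) is $(g,p_* )$-adapted if: (a) $w^t_{i+1}=gw^t_i$; (b) for $t\in[1,\sigma]$, $(w^t_i,w^t_j)=0$ if $|i-j|<p_t$ and $=1$ if $j-i=p_t$; (c) $(w^t_i,w^r_j)=0$ if $0\le i-j+p_r<2p_t$ and $1\le t<r\le\sigma$; (d) if $\kappa=1$, $(w^{\sigma+1}_i,w^{\sigma+1}_i)=2$; (e) if $\kappa=1$, $(w^t_i,w^{\sigma+1}_j)=0$ whenever $0\le i-j<2p_t$, $1\le t\le\sigma$; (f) $Q(w^t_i)=0$ for $t\in[1,\sigma]$, and $Q(w^{\sigma+1}_i)=1$ if $\kappa=1$. *)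

(* Defs.v *)
From HB Require Import structures.
From mathcomp Require Import all_boot all_order all_algebra.
Set Implicit Arguments. Unset Strict Implicit. Unset Printing Implicit Defensive.
Import Order.TTheory GRing.Theory Num.Theory.
Local Open Scope ring_scope.

Section Defs.
Variables (k : fieldType) (nn : nat).
Local Notation V := 'rV[k]_nn.

Definition bilinear_form (B : V -> V -> k) : Prop :=
  (forall (a : k) (x1 x2 y : V), B (a *: x1 + x2) y = a * B x1 y + B x2 y) /\
  (forall (a : k) (x y1 y2 : V), B x (a *: y1 + y2) = a * B x y1 + B x y2).

Definition quadratic_form (Q : V -> k) : Prop :=
  (forall (a : k) (x : V), Q (a *: x) = a ^+ 2 * Q x) /\
  bilinear_form (fun x y => Q (x + y) - Q x - Q y).

Definition in_perp (B : V -> V -> k) (x : V) : Prop := forall y : V, B x y = 0.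

(** g in Is(V) (g is linear by its type) *)
Definition is_isometry (B : V -> V -> k) (Q : V -> k) (g : V -> V) : Prop :=
  bijective g /\ (forall x y, B (g x) (g y) = B x y) /\ (forall x, Q (g x) = Q x).

(** twice p_t, with the convention p_{sigma+1} = 1/2 (so 2 p_{sigma+1} = 1) *)
Definition twop (p : nat -> nat) (sigma t : nat) : nat :=
  if (t <= sigma)%N then (2 * p t)%N else 1%N.

Definition adapted (B : V -> V -> k) (Q : V -> k) (g : V -> V)
    (p : nat -> nat) (sigma kappa : nat) (w : nat -> int -> V) : Prop :=
      (forall t i, (1 <= t <= sigma + kappa)%N -> w t (i + 1) = g (w t i)) /\
      (forall t (i j : int), (1 <= t <= sigma)%N ->
          (`|i - j| < (p t)%:Z -> B (w t i) (w t j) = 0) /\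
          (j - i = (p t)%:Z -> B (w t i) (w t j) = 1)) /\
      (forall t r (i j : int), (1 <= t)%N -> (t < r)%N -> (r <= sigma)%N ->
          0 <= i - j + (p r)%:Z -> i - j + (p r)%:Z < (2 * p t)%:Z ->
          B (w t i) (w r j) = 0) /\
      (kappa = 1%N -> forall i, B (w sigma.+1 i) (w sigma.+1 i) = 2) /\
      (kappa = 1%N -> forall t (i j : int), (1 <= t <= sigma)%N ->
          0 <= i - j -> i - j < (2 * p t)%:Z -> B (w t i) (w sigma.+1 j) = 0) /\
      (forall t i, (1 <= t <= sigma)%N -> Q (w t i) = 0) /\
      (kappa = 1%N -> forall i, Q (w sigma.+1 i) = 1).

Definition W_ef (p : nat -> nat) (sigma : nat) (w : nat -> int -> V) (e f : nat)
  : {vspace V} :=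
  <<[seq w x (Posz i) | x <- iota e (f - e).+1, i <- iota 0 (twop p sigma x)]>>%VS.

End Defs.

(* Main.v *)
Require Import Defs.
From HB Require Import structures.
From mathcomp Require Import all_boot all_order all_algebra zify.
Import Order.TTheory GRing.Theory Num.Theory.
Local Open Scope ring_scope.
Section Gen.
Variables (k : fieldType) (nn : nat).
Local Notation V := 'rV[k]_nn.

Lemma span_decomp (I : eqType) (v : I -> V) (s : seq I) x :
  uniq s -> x \in <<map v s>>%VS -> exists c : I -> k, x = \sum_(l <- s) c l *: v l.
Proof.
elim: s x => [|a s IH] x /=.
  move=> _; rewrite span_nil memv0 => /eqP ->; exists (fun _ => 0); by rewrite big_nil.
move=> /andP[anot us]; rewrite span_cons => /memv_addP [y /vlineP [al ->] [z zin ->]].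
have [c hc] := IH z us zin.
exists (fun l => if l == a then al else c l).
rewrite big_cons eqxx; congr (_ + _); rewrite hc; apply: eq_big_seq => l ls.
by case: eqP => // el; move: anot; rewrite -el ls.
Qed.

Lemma free_from_coef (I : eqType) (v : I -> V) (L : seq I) : uniq L ->
  (forall c : I -> k, \sum_(l <- L) c l *: v l = 0 -> forall l, l \in L -> c l = 0) ->
  free (map v L).
Proof.
case: L => [|a L0]; first by move=> _ _; rewrite /free span_nil dimv0.
set L := a :: L0 => uL H.
have := @freeP _ _ _ (in_tuple (map v L)); case=> // H2; exfalso; apply: H2 => k0 hk i.
pose k1 (j : nat) := if insub j is Some o then k0 o else 0.
have k1E (o : 'I_(size (map v L))) : k0 o = k1 o by rewrite /k1 valK.
pose c l := k1 (index l L).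
have Hs : \sum_(l <- L) c l *: v l = 0.
  move: hk; under eq_bigr do rewrite k1E.
  rewrite -(big_mkord xpredT (fun j => k1 j *: (map v L)`_j)) size_map => hk.
  rewrite (big_nth a); transitivity (\sum_(0 <= i < size L) k1 i *: (map v L)`_i); last exact: hk.
  apply: eq_big_nat => j /andP[_ hj].
  by rewrite /c index_uniq // (nth_map a).
have oL : (i < size L)%N by rewrite -(size_map v).
by rewrite k1E -(index_uniq a oL uL); exact: (H c Hs _ (mem_nth a oL)).
Qed.

Lemma tri_zero (I : eqType) (L : seq I) (key : I -> nat) (M : I -> I -> k) (c : I -> k) :
  uniq L ->
  (forall l m, l \in L -> m \in L -> (key m < key l)%N -> M l m = 0) ->
  (forall l m, l \in L -> m \in L -> key l = key m -> l = m) ->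
  (forall l, l \in L -> M l l != 0) ->
  (forall m, m \in L -> \sum_(l <- L) c l * M l m = 0) ->
  forall l, l \in L -> c l = 0.
Proof.
move=> uL Hlt Hinj Hd Hs.
suff H : forall N m, m \in L -> (key m < N)%N -> c m = 0.
  by move=> l lL; apply: (H (key l).+1).
elim=> [//|N IH] m mL; rewrite ltnS => kmN.
have := Hs m mL; rewrite (bigD1_seq m) //= big1_seq ?addr0.
  by move/eqP; rewrite mulf_eq0 (negPf (Hd m mL)) orbF => /eqP.
move=> l /andP[lm lL].
case: (ltngtP (key l) (key m)) => h.
- by rewrite (IH l lL (leq_trans h kmN)) mul0r.
- by rewrite Hlt // mulr0.
- by move: lm; rewrite (Hinj l m lL mL h) eqxx.
Qed.
End Gen.

Lemma lexK (x1 x2 y1 y2 K : nat) : (x1 * K + y1 < x2 * K + y2 -> y1 < K -> y2 < K ->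
  x1 < x2 \/ (x1 = x2 /\ y1 < y2))%N.
Proof.
move=> h h1 h2; case: (ltngtP x1 x2) => hx; [by left| |by right; subst; split=> //; lia].
exfalso; have : (x2.+1 * K <= x1 * K)%N by rewrite leq_mul2r hx orbT.
rewrite mulSn; lia.
Qed.
Lemma eqK (x1 x2 y1 y2 K : nat) : (x1 * K + y1 = x2 * K + y2 -> y1 < K -> y2 < K ->
  x1 = x2 /\ y1 = y2)%N.
Proof.
move=> h h1 h2; case: (ltngtP x1 x2) => hx; last by subst; split=> //; lia.
- exfalso; have : (x1.+1 * K <= x2 * K)%N by rewrite leq_mul2r hx orbT.
  rewrite mulSn; lia.
- exfalso; have : (x2.+1 * K <= x1 * K)%N by rewrite leq_mul2r hx orbT.
  rewrite mulSn; lia.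
Qed.

Section Core.
Variables (k : fieldType) (nn : nat).
Local Notation V := 'rV[k]_nn.
Variables (B : V -> V -> k) (hB : bilinear_form B).
Hypothesis hsym : forall x y, B x y = 0 -> B y x = 0.

Lemma BDl x1 x2 y : B (x1 + x2) y = B x1 y + B x2 y.
Proof. by have := hB.1 1 x1 x2 y; rewrite scale1r mul1r. Qed.
Lemma BDr x y1 y2 : B x (y1 + y2) = B x y1 + B x y2.
Proof. by have := hB.2 1 x y1 y2; rewrite scale1r mul1r. Qed.
Lemma B0l y : B 0 y = 0.
Proof. have h := BDl 0 0 y; rewrite addr0 in h; apply: (addrI (B 0 y)); by rewrite -h addr0. Qed.
Lemma B0r y : B y 0 = 0.
Proof. have h := BDr y 0 0; rewrite addr0 in h; apply: (addrI (B y 0)); by rewrite -h addr0. Qed.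
Lemma BZl a x y : B (a *: x) y = a * B x y.
Proof. by have := hB.1 a x 0 y; rewrite addr0 B0l addr0. Qed.
Lemma BZr a x y : B x (a *: y) = a * B x y.
Proof. by have := hB.2 a x y 0; rewrite addr0 B0r addr0. Qed.
Lemma Bsuml (I : Type) (s : seq I) (c : I -> k) (v : I -> V) y :
  B (\sum_(l <- s) c l *: v l) y = \sum_(l <- s) c l * B (v l) y.
Proof.
elim: s => [|a s IH]; first by rewrite !big_nil B0l.
by rewrite !big_cons BDl BZl IH.
Qed.
Lemma Bsumr (I : Type) (s : seq I) (c : I -> k) (v : I -> V) y :
  B y (\sum_(l <- s) c l *: v l) = \sum_(l <- s) c l * B y (v l).
Proof.
elim: s => [|a s IH]; first by rewrite !big_nil B0r.
by rewrite !big_cons BDr BZr IH.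
Qed.

Variables (p : nat -> nat) (sigma kappa : nat) (w : nat -> int -> V).
Hypothesis hb : forall t (i j : int), (1 <= t <= sigma)%N ->
          (`|i - j| < (p t)%:Z -> B (w t i) (w t j) = 0) /\
          (j - i = (p t)%:Z -> B (w t i) (w t j) = 1).
Hypothesis hc : forall t r (i j : int), (1 <= t)%N -> (t < r)%N -> (r <= sigma)%N ->
          0 <= i - j + (p r)%:Z -> i - j + (p r)%:Z < (2 * p t)%:Z ->
          B (w t i) (w r j) = 0.
Hypothesis he : kappa = 1%N -> forall t (i j : int), (1 <= t <= sigma)%N ->
          0 <= i - j -> i - j < (2 * p t)%:Z -> B (w t i) (w sigma.+1 j) = 0.
Hypothesis hpmono : forall t, (1 <= t)%N -> (t < sigma)%N -> (p t.+1 <= p t)%N.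

Lemma pmono t r : (1 <= t)%N -> (t <= r)%N -> (r <= sigma)%N -> (p r <= p t)%N.
Proof.
move=> h1; elim: r => [|r IH]; first by lia.
rewrite leq_eqVlt => /orP[/eqP <- //|]; rewrite ltnS => htr hr.
apply: leq_trans (IH htr (ltnW hr)); exact: hpmono (leq_trans h1 htr) hr.
Qed.

Definition key t i := ((i + p 1 - p t) * sigma.+1 + (sigma - t))%N.

Lemma AZ_zero t i r j : (1 <= t <= sigma)%N -> (i < p t)%N -> (1 <= r <= sigma)%N ->
  (j < p r)%N -> (key r j < key t i)%N -> B (w t (Posz i)) (w r (Posz (j + p r))) = 0.
Proof.
move=> ht hi hr hj; rewrite /key => /lexK.
have pt1 : (p t <= p 1)%N by apply: pmono; lia.
have pr1 : (p r <= p 1)%N by apply: pmono; lia.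
move=> /(_ ltac:(lia) ltac:(lia)) hk.
case: (ltngtP t r) => htr.
- have prt : (p r <= p t)%N by apply: pmono; lia.
  apply: hc; lia.
- have prt : (p t <= p r)%N by apply: pmono; lia.
  apply: hsym; apply: hc; lia.
- subst r; apply: (hb _ _ _ ht).1; lia.
Qed.

Lemma AZ_diag t i : (1 <= t <= sigma)%N -> B (w t (Posz i)) (w t (Posz (i + p t))) = 1.
Proof. by move=> ht; apply: (hb _ _ _ ht).2; lia. Qed.

Lemma ZZ_zero t i r j : (1 <= t <= sigma)%N -> (i < p t)%N -> (1 <= r <= sigma)%N ->
  (j < p r)%N -> B (w t (Posz (i + p t))) (w r (Posz (j + p r))) = 0.
Proof.
move=> ht hi hr hj.
case: (ltngtP t r) => htr.
- have prt : (p r <= p t)%N by apply: pmono; lia.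
  apply: hc; lia.
- have prt : (p t <= p r)%N by apply: pmono; lia.
  apply: hsym; apply: hc; lia.
- subst r; apply: (hb _ _ _ ht).1; lia.
Qed.

Lemma key_inj t i r j : (1 <= t <= sigma)%N -> (i < p t)%N -> (1 <= r <= sigma)%N ->
  (j < p r)%N -> key t i = key r j -> t = r /\ i = j.
Proof.
move=> ht hi hr hj; rewrite /key => /eqK.
have pt1 : (p t <= p 1)%N by apply: pmono; lia.
have pr1 : (p r <= p 1)%N by apply: pmono; lia.
move=> /(_ ltac:(lia) ltac:(lia)) hk.
have htr : t = r by lia.
subst r; split=> //; lia.
Qed.

Lemma key_bound t i : (1 <= t <= sigma)%N -> (i < p t)%N -> (key t i < p 1 * sigma.+1)%N.
Proof.
move=> ht hi; have pt1 : (p t <= p 1)%N by apply: pmono; lia.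
have h : ((i + p 1 - p t).+1 * sigma.+1 <= p 1 * sigma.+1)%N by rewrite leq_mul2r; apply/orP; right; lia.
rewrite /key; move: h; rewrite mulSn; lia.
Qed.

Definition vA (l : nat * nat) := w l.1 (Posz l.2).
Definition vZ (l : nat * nat) := w l.1 (Posz (l.2 + p l.1)).
Definition u := w sigma.+1 0.
Definition LA e m := [seq (t, i) | t <- iota e m, i <- iota 0 (p t)].

Lemma memLA e m l : (l \in LA e m) = ((e <= l.1 < e + m) && (l.2 < p l.1))%N.
Proof.
apply/allpairsPdep/idP.
  by move=> [t [i [ht hi ->]]] /=; rewrite mem_iota in ht; rewrite mem_iota in hi; rewrite ht; lia.
case: l => t i /= /andP[ht hi]; exists t, i; split=> //; rewrite mem_iota //; lia.
Qed.

Lemma uniqLA e m : uniq (LA e m).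
Proof.
apply: allpairs_uniq_dep; first exact: iota_uniq.
  by move=> ? _; exact: iota_uniq.
by move=> [a x] [b y] _ _ /= [-> ->].
Qed.

Lemma core e m (cA cZ : nat * nat -> k) (cu : k) :
  (1 <= e)%N -> (e + m <= sigma.+1)%N -> (kappa = 1%N \/ cu = 0) ->
  let E := \sum_(l <- LA e m) cA l *: vA l + \sum_(l <- LA e m) cZ l *: vZ l + cu *: u in
  (forall l, l \in LA e m -> B E (vZ l) = 0) ->
  (forall l, l \in LA e m -> B (vA l) E = 0) ->
  forall l, l \in LA e m -> cA l = 0 /\ cZ l = 0.
Proof.
move=> he1 hem hku E H1 H2.
have inR l : l \in LA e m -> (1 <= l.1 <= sigma)%N /\ (l.2 < p l.1)%N.
  by rewrite memLA => /andP[h1 h2]; split=> //; lia.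
have HA : forall l, l \in LA e m -> cA l = 0.
  apply: (@tri_zero k _ (LA e m) (fun l => key l.1 l.2) (fun l m => B (vA l) (vZ m)) cA).
  - exact: uniqLA.
  - move=> [t i] [r j] /inR /= [ht hi] /inR /= [hr hj] /= hlt.
    exact: AZ_zero.
  - move=> [t i] [r j] /inR /= [ht hi] /inR /= [hr hj] /= heq.
    by have [-> ->] := key_inj _ _ _ _ ht hi hr hj heq.
  - by move=> [t i] /inR /= [ht hi]; rewrite /vA /vZ /= AZ_diag ?oner_neq0.
  move=> [r0 j0] l0L; have /= [hr hj] := inR _ l0L.
  have ZZ : \sum_(l <- LA e m) cZ l * B (vZ l) (vZ (r0, j0)) = 0.
    apply: big1_seq => -[t i] /andP[_ lL]; have /= [ht hi] := inR _ lL.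
    by rewrite /vZ /= ZZ_zero ?mulr0.
  move: (H1 _ l0L); rewrite /E !BDl Bsuml Bsuml ZZ addr0.
  rewrite BZl; case: hku => [hk1|->]; last by rewrite mul0r addr0.
  rewrite /u /vZ hsym ?mulr0 ?addr0 //; apply: he => //=; lia.
split; first exact: HA.
move: l H; apply: (@tri_zero k _ (LA e m) (fun l => p 1 * sigma.+1 - key l.1 l.2)%N
   (fun l m => B (vA m) (vZ l)) cZ).
- exact: uniqLA.
- move=> [r j] [t i] /inR /= [hr hj] /inR /= [ht hi] /= hlt.
  apply: AZ_zero => //=.
  move: hlt; have := key_bound _ _ hr hj; have := key_bound _ _ ht hi.
  move: (p 1 * sigma.+1)%N => K /=; lia.
- move=> [t i] [r j] /inR /= [ht hi] /inR /= [hr hj] /= heq.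
  move: heq; have := key_bound _ _ hr hj; have := key_bound _ _ ht hi.
  move: (p 1 * sigma.+1)%N => K b1 b2 heq.
  have heq' : key t i = key r j by lia.
  by have [-> ->] := key_inj _ _ _ _ ht hi hr hj heq'.
- by move=> [t i] /inR /= [ht hi]; rewrite /vA /vZ /= AZ_diag ?oner_neq0.
move=> [r0 j0] l0L; have /= [hr hj] := inR _ l0L.
have AA : \sum_(l <- LA e m) cA l * B (vA (r0, j0)) (vA l) = 0.
  by apply: big1_seq => l /andP[_ lL]; rewrite HA ?mul0r.
move: (H2 _ l0L); rewrite /E !BDr Bsumr Bsumr AA add0r.
rewrite BZr; case: hku => [hk1|->]; last by rewrite mul0r addr0.
rewrite /u /vA he ?mulr0 ?addr0 //=; lia.
Qed.


Definition vG (l : nat * (nat * nat)) :=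
  if l.1 == 0%N then vA l.2 else if l.1 == 1%N then vZ l.2 else u.
Definition Lall e m (b : bool) :=
  [seq (0%N, l) | l <- LA e m] ++ [seq (1%N, l) | l <- LA e m] ++
  (if b then [:: (2%N, (0%N, 0%N))] else [::]).

Lemma uniqLall e m b : uniq (Lall e m b).
Proof.
rewrite /Lall !cat_uniq !map_inj_uniq ?uniqLA //; last by move=> ? ? [].
  2: by move=> ? ? [].
apply/and5P; split=> //.
- apply/hasPn => -[a l]; rewrite mem_cat => /orP[/mapP[l' _ [-> _]]|].
    by apply/mapP => -[? _ []].
  by case: b => //; rewrite inE => /eqP [-> _]; apply/mapP => -[? _ []].
- apply/hasPn => -[a l]; case: b => //; rewrite inE => /eqP [-> _].
  by apply/mapP => -[? _ []].
- by case: b.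
Qed.

Lemma sum_Lall e m b (c : nat * (nat * nat) -> k) :
  \sum_(l <- Lall e m b) c l *: vG l =
  \sum_(l <- LA e m) c (0%N, l) *: vA l + \sum_(l <- LA e m) c (1%N, l) *: vZ l +
  (if b then c (2%N, (0%N, 0%N)) else 0) *: u.
Proof.
rewrite /Lall !big_cat !big_map /= addrA; congr (_ + _).
by case: b; rewrite ?big_seq1 ?big_nil ?scale0r.
Qed.

Lemma decomp e m b x : x \in <<map vG (Lall e m b)>>%VS ->
  exists cA cZ cu, (b || (cu == 0)) /\
    x = \sum_(l <- LA e m) cA l *: vA l + \sum_(l <- LA e m) cZ l *: vZ l + cu *: u.
Proof.
move=> /(@span_decomp _ _ _ vG _ x (uniqLall e m b)) [c ->]; rewrite sum_Lall.
exists (fun l => c (0%N, l)), (fun l => c (1%N, l)), (if b then c (2%N, (0%N, 0%N)) else 0).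
by split=> //; case: b => //=; rewrite eqxx.
Qed.


Lemma W_sub e f : (1 <= e <= f)%N -> (f <= sigma + kappa)%N -> (kappa <= 1)%N ->
  (W_ef p sigma w e f <= <<map vG (Lall e ((minn f sigma).+1 - e) (f == sigma.+1))>>)%VS.
Proof.
move=> hef hf hk; apply/span_subvP => y /allpairsPdep [x [i [hx hi ->]]].
rewrite mem_iota in hx; rewrite mem_iota /twop in hi.
apply: memv_span; apply/mapP.
case: (leqP x sigma) => hxs; rewrite ?hxs in hi.
- case: (ltnP i (p x)) => hip.
    exists (0%N, (x, i)); last by rewrite /vG /vA.
    by rewrite mem_cat map_f // memLA /=; apply/andP; split=> //; lia.
  exists (1%N, (x, (i - p x)%N)); last by rewrite /vG /vZ /= subnK.
  by rewrite !mem_cat map_f ?orbT // memLA /=; apply/andP; split; lia.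
- move: hi; case: ifP => [h|_] hi; first by lia.
  have ex : x = sigma.+1 by lia.
  have ef : f = sigma.+1 by lia.
  have ei : i = 0%N by lia.
  exists (2%N, (0%N, 0%N)); last by rewrite /vG /u ex ei.
  by rewrite !mem_cat ef eqxx inE eqxx !orbT.
Qed.

Lemma W_memA e f l : (1 <= e)%N -> l \in LA e ((minn f sigma).+1 - e) ->
  vA l \in W_ef p sigma w e f.
Proof.
case: l => t i he1; rewrite memLA /= => /andP[ht hi]; apply: memv_span.
have {}ht : (e <= t < e + ((minn f sigma).+1 - e))%N by [].
have hts : (t <= sigma)%N /\ (t <= f)%N.
  move: ht; rewrite /minn; case: (ltnP f sigma); lia.
apply: (allpairs_f_dep (fun x (i : nat) => w x (Posz i))); rewrite mem_iota.
  rewrite /=; lia.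
by rewrite /= /twop (proj1 hts); lia.
Qed.

Lemma W_memZ e f l : (1 <= e)%N -> l \in LA e ((minn f sigma).+1 - e) ->
  vZ l \in W_ef p sigma w e f.
Proof.
case: l => t i he1; rewrite memLA /= => /andP[ht hi]; apply: memv_span.
have {}ht : (e <= t < e + ((minn f sigma).+1 - e))%N by [].
have hts : (t <= sigma)%N /\ (t <= f)%N.
  move: ht; rewrite /minn; case: (ltnP f sigma); lia.
apply: (allpairs_f_dep (fun x (i : nat) => w x (Posz i))); rewrite mem_iota.
  rewrite /=; lia.
by rewrite /= /twop (proj1 hts); lia.
Qed.

Lemma W_memu e : (1 <= e <= sigma.+1)%N -> u \in W_ef p sigma w e sigma.+1.
Proof.
move=> he1; apply: memv_span.
apply: (allpairs_f_dep (fun x (i : nat) => w x (Posz i)) (x := sigma.+1) (y := 0%N)).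
  rewrite mem_iota; lia.
by rewrite /twop ltnn.
Qed.


Lemma rad_coeffs e f x : (1 <= e <= f)%N -> (f <= sigma + kappa)%N -> (kappa <= 1)%N ->
  x \in W_ef p sigma w e f -> (forall y, y \in W_ef p sigma w e f -> B x y = 0) ->
  exists cu, ((f == sigma.+1) || (cu == 0)) /\ x = cu *: u.
Proof.
move=> hef hf hk xW hx.
set m := ((minn f sigma).+1 - e)%N.
have := subvP (@W_sub e f hef hf hk) _ xW => /decomp [cA [cZ [cu [hb' ex]]]].
have hku : kappa = 1%N \/ cu = 0.
  case/orP: hb' => [/eqP ef|/eqP ->]; [left; lia | by right].
have hem : (e + m <= sigma.+1)%N by rewrite /m /minn; case: (ltnP f sigma); lia.
have he1 : (1 <= e)%N by lia.
have H := @core e m cA cZ cu he1 hem hku; rewrite /= -ex in H.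
have Hc := H (fun l lL => hx _ (@W_memZ e f l he1 lL))
             (fun l lL => hsym _ _ (hx _ (@W_memA e f l he1 lL))).
exists cu; split=> //.
have s1 : \sum_(l <- LA e m) cA l *: vA l = 0.
  by apply: big1_seq => l /andP[_ lL]; rewrite (Hc l lL).1 scale0r.
have s2 : \sum_(l <- LA e m) cZ l *: vZ l = 0.
  by apply: big1_seq => l /andP[_ lL]; rewrite (Hc l lL).2 scale0r.
by rewrite ex s1 s2 !add0r.
Qed.

Lemma u_perp : kappa = 1%N -> (2%:R : k) = 0 -> u != 0 -> B u u = 2%:R ->
  nn = (2 * sumn (map p (iota 1 sigma)) + 1)%N -> forall y, B u y = 0.
Proof.
move=> hk1 h2 hu0 hBuu hnn y.
have hfree : free (map vG (Lall 1 sigma true)).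
  apply: free_from_coef; first exact: uniqLall.
  move=> c; rewrite sum_Lall /= => hs0.
  have hem : (1 + sigma <= sigma.+1)%N by rewrite add1n.
  have H := @core 1 sigma (fun l => c (0%N, l)) (fun l => c (1%N, l)) (c (2%N, (0%N, 0%N)))
     (leqnn 1) hem (or_introl hk1).
  rewrite /= hs0 in H.
  have Hc := H (fun l _ => B0l _) (fun l _ => B0r _).
  move=> l; rewrite /Lall !mem_cat => /or3P [/mapP [l' l'L ->]|/mapP [l' l'L ->]|].
  - exact: (Hc l' l'L).1.
  - exact: (Hc l' l'L).2.
  rewrite inE => /eqP ->.
  have s1 : \sum_(l <- LA 1 sigma) c (0%N, l) *: vA l = 0.
    by apply: big1_seq => l0 /andP[_ lL]; rewrite (Hc l0 lL).1 scale0r.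
  have s2 : \sum_(l <- LA 1 sigma) c (1%N, l) *: vZ l = 0.
    by apply: big1_seq => l0 /andP[_ lL]; rewrite (Hc l0 lL).2 scale0r.
  move: hs0; rewrite s1 s2 !add0r => /eqP; rewrite scaler_eq0 (negPf hu0) orbF.
  by move/eqP.
have hdim : \dim <<map vG (Lall 1 sigma true)>> = nn.
  move: hfree; rewrite /free => /eqP ->; rewrite size_map /Lall !size_cat !size_map /=.
  rewrite /LA size_allpairs_dep.
  have -> : [seq size (iota 0 (p x)) | x <- iota 1 sigma] = map p (iota 1 sigma).
    by apply: eq_map => t; rewrite size_iota.
  lia.
have hfull : <<map vG (Lall 1 sigma true)>>%VS = fullv.
  apply/eqP; rewrite eqEdim subvf hdim dimvf /dim /= mul1n leqnn //.
have := memvf y; rewrite -hfull => /decomp [cA [cZ [cu [_ ->]]]].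
have s1 : \sum_(l <- LA 1 sigma) cA l * B u (vA l) = 0.
  apply: big1_seq => -[t i] /andP[_]; rewrite memLA /= => /andP[ht hi].
  rewrite /u /vA hsym ?mulr0 //; apply: he => //=; lia.
have s2 : \sum_(l <- LA 1 sigma) cZ l * B u (vZ l) = 0.
  apply: big1_seq => -[t i] /andP[_]; rewrite memLA /= => /andP[ht hi].
  rewrite /u /vZ hsym ?mulr0 //; apply: he => //=; lia.
by rewrite !BDr !Bsumr s1 s2 BZr hBuu h2 mulr0 !addr0.
Qed.

End Core.

Theorem mainTheorem4 (k : closedFieldType) (nn n kappa : nat)
  (B : 'rV[k]_nn -> 'rV[k]_nn -> k) (Q : 'rV[k]_nn -> k)
  (hnn : (3 <= nn)%N) (hkappa : (kappa <= 1)%N) (hn : nn = (2 * n + kappa)%N)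
  (hB : bilinear_form B) (hQ : quadratic_form Q)
  (hcases :
     ((forall x, Q x = 0) /\ (forall x, B x x = 0) /\
        (forall x, in_perp B x -> x = 0))
     \/
     ((exists x, Q x != 0) /\ (forall x y, B x y = Q (x + y) - Q x - Q y) /\
        (forall x y, in_perp B x -> in_perp B y -> Q x = Q y -> x = y)))
  (sigma : nat) (p : nat -> nat)
  (hp1 : forall t, (1 <= t <= sigma)%N -> (1 <= p t)%N)
  (hpmono : forall t, (1 <= t)%N -> (t < sigma)%N -> (p t.+1 <= p t)%N)
  (hpsum : (\sum_(1 <= t < sigma.+1) p t)%N = n)
  (g : {linear 'rV[k]_nn -> 'rV[k]_nn}) (hg : is_isometry B Q g)
  (w : nat -> int -> 'rV[k]_nn) (hw : adapted B Q g p sigma kappa w)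
  (e f : nat) (hef : (1 <= e <= f)%N) (hf : (f <= sigma + kappa)%N)
  (hstable : forall x, x \in W_ef p sigma w e f -> g x \in W_ef p sigma w e f) :
  let rad x := x \in W_ef p sigma w e f /\
               (forall y, y \in W_ef p sigma w e f -> B x y = 0) in
  if [&& kappa == 1%N, f == sigma.+1 & 2%N \in [pchar k]]
  then forall x, rad x <-> in_perp B x
  else forall x, rad x -> x = 0.
Proof.
move=> rad.
have [_ [hb [hc [hd [he [_ hf2]]]]]] := hw.
have hsym : forall x y, B x y = 0 -> B y x = 0.
  case: hcases => [[_ [hal _]] | [_ [hQB _]]] x y hxy.
  - by have := hal (x + y); rewrite (@BDl _ _ _ hB) !(@BDr _ _ _ hB) !hal hxy add0r !addr0 add0r.
  - by rewrite hQB (addrC y x) -addrA (addrC (- Q y)) addrA -hQB.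
have hsum : (\sum_(1 <= t < sigma.+1) p t)%N = sumn (map p (iota 1 sigma)).
  rewrite /index_iota subSS subn0; elim: (iota 1 sigma) => [|a s IH].
    by rewrite big_nil.
  by rewrite big_cons /= IH.
case: ifP => hcond.
- move/and3P: hcond => [/eqP hk1 /eqP hf2' hch].
  have h2 : (2%:R : k) = 0 by move: hch; rewrite inE => /eqP.
  have [hQn [hQB hinj]] : (exists x, Q x != 0) /\ (forall x y, B x y = Q (x + y) - Q x - Q y) /\
        (forall x y, in_perp B x -> in_perp B y -> Q x = Q y -> x = y).
    case: hcases => [[hQ0 _]|H]; last exact: H.
    by exfalso; have := hf2 hk1 0; rewrite hQ0 => /eqP; rewrite eq_sym oner_eq0.
  have hQ0 : Q 0 = 0 by have := hQ.1 0 0; rewrite scale0r expr2 mul0r mul0r.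
  have hu0 : u k nn sigma w != 0.
    by apply/negP => /eqP hu; have := hf2 hk1 0; rewrite -/(u k nn sigma w) hu hQ0 => /eqP; rewrite eq_sym oner_eq0.
  have hnsum : nn = (2 * sumn (map p (iota 1 sigma)) + 1)%N by rewrite -hsum hpsum hn hk1.
  have up := @u_perp k nn B hB hsym p sigma kappa w hb hc he hpmono hk1 h2 hu0 (hd hk1 0) hnsum.
  have hu : u k nn sigma w \in W_ef p sigma w e f.
    rewrite hf2'; apply: (@W_memu k nn B p sigma kappa w he); lia.
  move=> x; split.
  + move=> [xW hx].
    have [cu [_ ->]] := @rad_coeffs k nn B hB hsym p sigma kappa w hb hc he hpmono e f x hef hf hkappa xW hx.
    by move=> y; rewrite (@BZl _ _ _ hB) up mulr0.
  + move=> hxp.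
    have [a ha2] := @solve_monicpoly k 2 (fun i => if i == 0%N then Q x else 0) isT.
    rewrite big_ord_recr big_ord1 /= mul0r addr0 expr0 mulr1 in ha2.
    have xe : x = a *: u k nn sigma w.
      apply: hinj => //.
        by move=> y; rewrite (@BZl _ _ _ hB) up mulr0.
      by rewrite hQ.1 (hf2 hk1 0) mulr1 ha2.
    split; first by rewrite xe memvZ.
    by move=> y _; exact: hxp.
- move=> x [xW hx].
  have [cu [hcu xe]] := @rad_coeffs k nn B hB hsym p sigma kappa w hb hc he hpmono e f x hef hf hkappa xW hx.
  rewrite xe in hx *.
  case/orP: hcu => [/eqP ef|/eqP ->]; last by rewrite scale0r.
  have hk1 : kappa = 1%N by lia.
  have h2 : (2%:R : k) != 0.
    by apply/negP => h2; move: hcond; rewrite hk1 ef !eqxx inE h2.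
  have hu : u k nn sigma w \in W_ef p sigma w e f.
    rewrite ef; apply: (@W_memu k nn B p sigma kappa w he); lia.
  have := hx _ hu; rewrite (@BZl _ _ _ hB) (hd hk1 0) => /eqP; rewrite mulf_eq0 (negPf h2) orbF.
  by move/eqP ->; rewrite scale0r.
Qed.
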